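(* Let $(\mathcal{G},d_\mathcal{G})$, $(\mathcal{X},d_\mathcal{X})$, $(\mathcal{Y},d_\mathcal{Y})$ be pseudo-metric spaces and let $\mathcal{H}$ be the class of $c_\mathcal{H}$-Lipschitz continuous graph embeddings from $(\mathcal{G},d_\mathcal{G})$ to $(\mathcal{X},d_\mathcal{X})$. Assume the loss function $\ell\colon\mathcal{X}\times\mathcal{Y}\to\mathbb{R}^+$ is $c_\ell$-Lipschitz with respect to $d_\infty$. Then, for every $\varepsilon>0$, graph learning algorithms for $\mathcal{H}$ are $\bigl(\mathcal{N}(\mathcal{G},d_\mathcal{G},\varepsilon/(2c_\mathcal{H}))\cdot\mathcal{N}(\mathcal{Y},d_\mathcal{Y},\varepsilon/2),\ c_\ell\varepsilon\bigr)$-robust.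
   Context: A pseudo-metric satisfies $d(x,x)=0$, symmetry and the triangle inequality. $d_\infty((x,y),(x',y'))=\max\{d_\mathcal{X}(x,x'),d_\mathcal{Y}(y,y')\}$. $f$ is $c$-Lipschitz if $d(f(x),f(x'))\le c\,d(x,x')$. $\mathcal{N}(\mathcal{X},d,\varepsilon)$ is the minimal cardinality of an $\varepsilon$-cover (a subset $C$ such that every point is within distance $\varepsilon$ of some point of $C$). Learning setup: $\mathcal{Z}=\mathcal{G}\times\mathcal{Y}$ with a distribution; a graph learning algorithm maps each sample $\mathcal{S}$ (finite i.i.d. collection from $\mathcal{Z}$) to $h_\mathcal{S}\in\mathcal{H}$. The algorithm is $(K,\varepsilon)$-robust if for all samples $\mathcal{S}$, $\mathcal{Z}$ can be partitioned into $K$ sets $C_i$ such that whenever $(G,y)\in\mathcal{S}\cap C_i$ and $(G',y')\in C_i$, $|\ell(h_\mathcal{S}(G),y)-\ell(h_\mathcal{S}(G'),y')|<\varepsilon$. *)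

(* Defs.v *)
From Stdlib Require Import Reals List.
Open Scope R_scope.

Definition pseudo_metric {T : Type} (d : T -> T -> R) : Prop :=
  (forall x, d x x = 0) /\
  (forall x y, d x y = d y x) /\
  (forall x y z, d x z <= d x y + d y z).

Definition d_inf {A B : Type} (dA : A -> A -> R) (dB : B -> B -> R)
  (p q : A * B) : R := Rmax (dA (fst p) (fst q)) (dB (snd p) (snd q)).

Definition lipschitz {A B : Type} (dA : A -> A -> R) (dB : B -> B -> R)
  (c : R) (f : A -> B) : Prop :=
  forall a a', dB (f a) (f a') <= c * dA a a'.

Definition dR (r s : R) : R := Rabs (r - s).

Definition is_cover {T : Type} (d : T -> T -> R) (eps : R) (C : list T) : Prop :=
  forall x, exists c, In c C /\ d x c < eps.

Definition covering_number {T : Type} (d : T -> T -> R) (eps : R) (n : nat) : Prop :=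
  (exists C, is_cover d eps C /\ length C = n) /\
  (forall C, is_cover d eps C -> (n <= length C)%nat).

(** For every sample S, Z = G * Y is partitioned into K sets
    (cell z < K is the index of the set containing z). *)
Definition robust {G X Y : Type} (l : X * Y -> R)
  (A : list (G * Y) -> G -> X) (K : nat) (eps : R) : Prop :=
  forall S : list (G * Y),
    exists cell : G * Y -> nat,
      (forall z, (cell z < K)%nat) /\
      (forall s z, In s S -> cell s = cell z ->
         Rabs (l (A S (fst s), snd s) - l (A S (fst z), snd z)) < eps).

(* Main.v *)
Require Import Defs.
From Stdlib Require Import Reals List Lra Lia Psatz ClassicalEpsilon.
Open Scope R_scope.

Lemma cover_idx {T : Type} (d : T -> T -> R) r C :
  is_cover d r C -> forall x, exists i, (i < length C)%nat /\ d x (nth i C x) < r.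
Proof.
  intros H x. destruct (H x) as [c [Hc Hd]].
  destruct (In_nth C c x Hc) as [n [Hn Hnth]]. exists n. rewrite Hnth. auto.
Qed.

Lemma decode (a b a' b' n : nat) : (b < n)%nat -> (b' < n)%nat ->
  (a * n + b = a' * n + b')%nat -> a = a' /\ b = b'.
Proof.
  intros h1 h2 h3.
  assert (a = a').
  { destruct (Nat.lt_total a a') as [h|[h|h]]; auto.
    - assert (S a * n <= a' * n)%nat by (apply Nat.mul_le_mono_r; lia). simpl in *. lia.
    - assert (S a' * n <= a * n)%nat by (apply Nat.mul_le_mono_r; lia). simpl in *. lia. }
  subst; lia.
Qed.

Theorem mainTheorem8
  (G X Y : Type)
  (dG : G -> G -> R) (dX : X -> X -> R) (dY : Y -> Y -> R)
  (HdG : pseudo_metric dG) (HdX : pseudo_metric dX) (HdY : pseudo_metric dY)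
  (cH cl : R) (HcH : 0 < cH) (Hcl : 0 < cl)
  (l : X * Y -> R)
  (Hl_nonneg : forall p, 0 <= l p)
  (Hl_lip : lipschitz (d_inf dX dY) dR cl l)
  (A : list (G * Y) -> G -> X)
  (HA : forall S, lipschitz dG dX cH (A S))
  (eps : R) (Heps : 0 < eps)
  (nG nY : nat)
  (HnG : covering_number dG (eps / (2 * cH)) nG)
  (HnY : covering_number dY (eps / 2) nY) :
  robust l A (nG * nY) (cl * eps).
Proof.
  destruct HnG as [[CG [HCG HlG]] _]. destruct HnY as [[CY [HCY HlY]] _].
  pose proof (cover_idx _ _ _ HCG) as IG. pose proof (cover_idx _ _ _ HCY) as IY.
  set (fG := fun x => proj1_sig (constructive_indefinite_description _ (IG x))).
  set (fY := fun x => proj1_sig (constructive_indefinite_description _ (IY x))).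
  assert (PG : forall x, (fG x < nG)%nat /\ dG x (nth (fG x) CG x) < eps / (2 * cH)).
  { intro x. unfold fG. destruct (constructive_indefinite_description _ (IG x)) as [i Hi].
    simpl. rewrite <- HlG. exact Hi. }
  assert (PY : forall x, (fY x < nY)%nat /\ dY x (nth (fY x) CY x) < eps / 2).
  { intro x. unfold fY. destruct (constructive_indefinite_description _ (IY x)) as [i Hi].
    simpl. rewrite <- HlY. exact Hi. }
  intro Smp. exists (fun z => (fG (fst z) * nY + fY (snd z))%nat). split.
  - intros [g y]. simpl. destruct (PG g) as [h1 _]. destruct (PY y) as [h2 _].
    assert (S (fG g) * nY <= nG * nY)%nat by (apply Nat.mul_le_mono_r; lia).
    simpl in *. lia.
  - intros [g y] [g' y'] _ Hc. simpl in *.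
    destruct (PG g) as [a1 a2]. destruct (PG g') as [b1 b2].
    destruct (PY y) as [c1 c2]. destruct (PY y') as [e1 e2].
    destruct (decode _ _ _ _ _ c1 e1 Hc) as [E1 E2].
    rewrite E1 in a2. rewrite E2 in c2.
    rewrite (nth_indep CG g g') in a2 by lia.
    rewrite (nth_indep CY y y') in c2 by lia.
    destruct HdG as [_ [sG tG]]. destruct HdY as [_ [sY tY]].
    set (cg := nth (fG g') CG g') in *. set (cy := nth (fY y') CY y') in *.
    assert (DG : dG g g' < eps / cH).
    { pose proof (tG g cg g'). rewrite (sG cg g') in H.
      assert (eps / (2*cH) + eps/(2*cH) = eps / cH) by (field; lra). lra. }
    assert (DY : dY y y' < eps).
    { pose proof (tY y cy y'). rewrite (sY cy y') in H. lra. }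
    assert (DX : dX (A Smp g) (A Smp g') < eps).
    { pose proof (HA Smp g g').
      assert (cH * dG g g' < cH * (eps / cH)) by (apply Rmult_lt_compat_l; lra).
      replace (cH * (eps / cH)) with eps in H0 by (field; lra). lra. }
    pose proof (Hl_lip (A Smp g, y) (A Smp g', y')). unfold dR, d_inf in H. simpl in H.
    assert (Rmax (dX (A Smp g) (A Smp g')) (dY y y') < eps) by (apply Rmax_lub_lt; lra).
    assert (cl * Rmax (dX (A Smp g) (A Smp g')) (dY y y') < cl * eps)
      by (apply Rmult_lt_compat_l; lra).
    lra.
Qed.
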